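(* Let $d\ge4$ be an integer and $\Gamma=\mathbb{Z}_2^d$. Then $\Gamma$ is not $(D(\Gamma)-1)$-close.
   Context: For a finite abelian group $\Gamma$, its Davenport constant $D(\Gamma)$ is the minimum integer $\ell$ such that every sequence of $\ell$ elements of $\Gamma$ has a nonempty subsequence summing to $0$. For an integer $k\ge1$, a finite abelian group $\Gamma$ is $k$-close if for every matroid $M$, every labeling $\psi\colon E(M)\to\Gamma$, every $g\in\Gamma$ and every basis $B$ of $M$, if $M$ has a basis with label $g$ then it has a basis $B^*$ with $\psi(B^* )=g$ and $|B\setminus B^*|\le k$, where $\psi(S):=\sum_{x\in S}\psi(x)$. *)

(* Defs.v *)
From HB Require Import structures.
From mathcomp Require Import all_boot all_order all_algebra.
Set Implicit Arguments. Unset Strict Implicit. Unset Printing Implicit Defensive.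
Import GRing.Theory.
Local Open Scope ring_scope.

Definition is_matroid_bases (E : finType) (Bs : {set {set E}}) : Prop :=
  Bs != set0 /\
  forall B1 B2, B1 \in Bs -> B2 \in Bs ->
    forall x, x \in B1 :\: B2 ->
      exists2 y, y \in B2 :\: B1 & (y |: (B1 :\ x)) \in Bs.

Definition label_sum (E : finType) (G : zmodType) (psi : E -> G) (S : {set E}) : G :=
  \sum_(x in S) psi x.

Definition has_zero_sum_subseq (G : zmodType) (l : nat) (s : 'I_l -> G) : Prop :=
  exists I : {set 'I_l}, I != set0 /\ \sum_(i in I) s i = 0.

Definition is_davenport_constant (G : zmodType) (D : nat) : Prop :=
  (forall s : 'I_D -> G, has_zero_sum_subseq s) /\
  (forall l, (forall s : 'I_l -> G, has_zero_sum_subseq s) -> (D <= l)%N).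

Definition k_close (G : zmodType) (k : nat) : Prop :=
  forall (E : finType) (Bs : {set {set E}}), is_matroid_bases Bs ->
  forall (psi : E -> G) (g : G) (B : {set E}), B \in Bs ->
    (exists2 B', B' \in Bs & label_sum psi B' = g) ->
    exists2 Bstar, Bstar \in Bs &
      label_sum psi Bstar = g /\ (#|B :\: Bstar| <= k)%N.

(* Main.v *)
Require Import Defs.
From mathcomp Require Import all_boot all_order all_algebra.
From mathcomp Require Import zify.
Set Implicit Arguments. Unset Strict Implicit. Unset Printing Implicit Defensive.
Import GRing.Theory.

Section Gen.
Variables (E : finType) (G : zmodType) (psi : E -> G).
Hypothesis inj : injective psi.
Variables (r : nat) (Bst : {set E}).
Hypothesis cBst : #|Bst| = r.

Definition mkBs := [set C : {set E} | (#|C| == r) &&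
   ((label_sum psi C != label_sum psi Bst) || (C == Bst))].

Lemma lab_U1 (y : E) (S : {set E}) : y \notin S -> label_sum psi (y |: S) = (psi y + label_sum psi S)%R.
Proof. by move=> yS; rewrite /label_sum big_setU1. Qed.

Lemma exch_matroid : is_matroid_bases mkBs.
Proof.
split.
  by apply/set0Pn; exists Bst; rewrite inE cBst !eqxx orbT.
move=> B1 B2; rewrite !inE => /andP[/eqP c1 h1] /andP[/eqP c2 h2] x.
rewrite inE => /andP[xnB2 xB1].
have sz : #|B2 :\: B1| = #|B1 :\: B2| by rewrite !cardsD c1 c2 setIC.
have xD : x \in B1 :\: B2 by rewrite inE xnB2 xB1.
have : 0 < #|B2 :\: B1| by rewrite sz; apply/card_gt0P; exists x.
case/card_gt0P => y yD.
case: (boolP [exists y, (y \in B2 :\: B1) && (y |: (B1 :\ x) \in mkBs)]).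
  by case/existsP => y' /andP[h h']; exists y'.
rewrite negb_exists => /forallP Hall; exfalso.
have cardC z : z \in B2 :\: B1 -> #|z |: (B1 :\ x)| = r.
  rewrite inE => /andP[zB1 _].
  rewrite cardsU1 inE (negbTE zB1) andbF /=.
  by rewrite (cardsD1 x B1) xB1 in c1; rewrite -c1.
have labC z : z \in B2 :\: B1 ->
    label_sum psi (z |: (B1 :\ x)) = label_sum psi Bst /\ z |: (B1 :\ x) != Bst.
  move=> zD; move: (Hall z); rewrite zD /= inE cardC // eqxx /= negb_or negbK.
  by case/andP=> /eqP -> ->.
have one z : z \in B2 :\: B1 -> z = y.
  move=> zD; apply: inj.
  have nz : z \notin B1 :\ x by move: zD; rewrite !inE => /andP[/negbTE -> _]; rewrite andbF.
  have ny : y \notin B1 :\ x by move: yD; rewrite !inE => /andP[/negbTE -> _]; rewrite andbF.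
  have [l1 _] := labC z zD; have [l2 _] := labC y yD.
  rewrite lab_U1 // in l1; rewrite lab_U1 // in l2.
  by apply: (addIr (label_sum psi (B1 :\ x))); rewrite l1 l2.
have le1 : #|B1 :\: B2| <= 1.
  rewrite -sz; apply/card_le1P => a aD b; rewrite [in RHS]inE.
  rewrite (one a aD); apply/idP/eqP => [/one -> //|->]; exact: yD.
have eqC : y |: (B1 :\ x) = B2.
  apply/eqP; rewrite eqEcard cardC // c2 leqnn andbT.
  apply/subsetP => z; rewrite !inE => /orP[/eqP ->|/andP[zx zB1]].
    by move: yD; rewrite inE => /andP[_ ->].
  apply/negPn/negP => zB2.
  have zD : z \in B1 :\: B2 by rewrite inE zB2 zB1.
  move/card_le1P: le1 => /(_ x xD z); rewrite zD => /esym.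
  by rewrite inE (negbTE zx).
have [_ ne] := labC y yD.
move: (Hall y); rewrite yD eqC /= inE c2 eqxx /=.
by rewrite h2.
Qed.

End Gen.

Lemma not_close (E : finType) (G : zmodType) (psi : E -> G) (inj : injective psi)
  (r : nat) (B Bst : {set E}) : (0 < r)%N -> #|B| = r -> #|Bst| = r ->
  [disjoint B & Bst] -> label_sum psi B != label_sum psi Bst -> ~ k_close G r.-1.
Proof.
move=> r0 cB cBst dis ne Hk.
have BB : B \in mkBs psi r Bst by rewrite inE cB eqxx ne.
have := Hk E _ (exch_matroid inj cBst) psi (label_sum psi Bst) B BB.
case.
  by exists Bst => //; rewrite inE cBst !eqxx orbT.
move=> C; rewrite inE => /andP[_ hC] [lC cle].
move: hC; rewrite lC eqxx /= => /eqP eC; subst C.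
move/setDidPl: dis => dis; rewrite dis cB in cle.
by move: cle; case: r r0 {cB cBst BB Hk} => // n _; rewrite ltnn.
Qed.

Lemma k_close_mono (G : zmodType) k k' : (k <= k')%N -> k_close G k -> k_close G k'.
Proof.
move=> kk H E Bs M psi g B BB ex.
have [C CB [lC cC]] := H E Bs M psi g B BB ex.
by exists C => //; split => //; apply: leq_trans kk.
Qed.

Lemma Z2_double d (v : 'rV['Z_2]_d) : (v + v = 0)%R.
Proof.
apply/rowP => i; rewrite !mxE.
by case: (v ord0 i) => [[|[|[]]] ?] //; apply/val_inj.
Qed.

Lemma zero_sum_Z2 d (s : 'I_d.+1 -> 'rV['Z_2]_d) : has_zero_sum_subseq s.
Proof.
pose F := fun I : {set 'I_d.+1} => (\sum_(i in I) s i)%R.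
have : ~~ injectiveb F.
  apply/negP => /injectiveP Fi; have := @leq_card _ _ F Fi.
  rewrite card_mx card_ord mul1n.
  have := max_card (mem (powerset [set: 'I_d.+1])).
  rewrite card_powerset cardsT card_ord => h1 h2.
  have := leq_trans h1 h2; rewrite expnS.
  have : (0 < 2 ^ d)%N by rewrite expn_gt0.
  move=> a b; rewrite /Zp_trunc /= in b *; lia.
case/injectivePn => I [J neq eqF].
exists ((I :\: J) :|: (J :\: I)); split.
  apply/negP; rewrite setU_eq0 !setD_eq0 => /andP[h1 h2].
  by move: neq; rewrite eqEsubset h1 h2.
rewrite (eq_bigl [predU (I :\: J) & (J :\: I)]); last by move=> i; rewrite !inE.
rewrite bigU; last first.
  by apply/pred0P => i /=; rewrite !inE; case: (i \in I); case: (i \in J).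
have eq2 : (\sum_(i in I :\: J) s i = \sum_(i in J :\: I) s i)%R.
  move: eqF; rewrite /F (@big_setID _ _ _ _ I J) (@big_setID _ _ _ _ J I) setIC.
  by move/addrI.
by rewrite eq2; apply: Z2_double.
Qed.

Lemma disjP (T : finType) (A B : {set T}) :
  (forall x, x \in A -> x \in B -> False) -> [disjoint A & B].
Proof.
move=> H; rewrite disjoint_subset; apply/subsetP => x xA; rewrite inE.
by apply/negP => xB; exact: H x xA xB.
Qed.

Lemma pow_bound d : (4 <= d)%N -> (2 * d + 3 <= 2 ^ d)%N.
Proof.
elim: d => // d IH; rewrite leq_eqVlt => /orP[/eqP <- //|].
rewrite ltnS => /IH h; rewrite expnS.
have : (0 < 2 ^ d)%N by rewrite expn_gt0.
lia.
Qed.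

Theorem theorem6p13 (d : nat) (hd : (4 <= d)%N) (D : nat) :
  is_davenport_constant 'rV['Z_2]_d D -> ~ k_close 'rV['Z_2]_d (D - 1).
Proof.
move=> [_ Hmin] Hk.
have HD : (D <= d.+1)%N := Hmin d.+1 (@zero_sum_Z2 d).
have {}Hk : k_close 'rV['Z_2]_d (d.+1).-1.
  by apply: k_close_mono Hk; lia.
pose E := (('I_d.+1 + 'I_d.+1) + unit)%type.
have h : (#|{: E}| <= #|{: 'rV['Z_2]_d}|)%N.
  rewrite !card_sum !card_ord card_unit card_mx card_ord mul1n.
  have := pow_bound hd; rewrite /Zp_trunc /=; lia.
pose f (x : E) : 'rV['Z_2]_d := enum_val (widen_ord h (enum_rank x)).
have finj : injective f.
  move=> x y /enum_val_inj /(congr1 val) /= /val_inj /enum_rank_inj; done.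
pose B0 : {set E} := [set inl (inl i) | i : 'I_d.+1].
pose B1 : {set E} := [set inl (inr i) | i : 'I_d.+1].
have cB0 : #|B0| = d.+1.
  by rewrite card_imset ?card_ord // => i j [].
have cB1 : #|B1| = d.+1.
  by rewrite card_imset ?card_ord // => i j [].
have dis : [disjoint B0 & B1].
  by apply/disjP => z /imsetP[i _ ->] /imsetP[j _].
have [ne|eq] := boolP (label_sum f B0 != label_sum f B1).
  exact: (not_close finj _ cB0 cB1 dis ne Hk).
move/negPn/eqP: eq => eq.
pose a : E := inl (inl ord0).
pose w : E := inr tt.
have aB0 : a \in B0 by apply/imsetP; exists ord0.
have wB0 : w \notin B0 :\ a.
  by rewrite !inE; apply/negP => /andP[_ /imsetP[i _]].
pose B := w |: (B0 :\ a).
have cB : #|B| = d.+1.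
  have := cB0; rewrite (cardsD1 a B0) aB0 => c.
  by rewrite /B cardsU1 wB0; exact: c.
have disB : [disjoint B & B1].
  apply/disjP => z; rewrite !inE => /orP[/eqP ->|/andP[_ zB0]].
    by move/imsetP => [i _].
  by rewrite (disjointFr dis zB0).
apply: (not_close finj _ cB cB1 disB _ Hk) => //.
apply/negP => /eqP eqB.
have anB : a \notin B0 :\ a by rewrite !inE eqxx.
move: eq; rewrite -(setD1K aB0) (@lab_U1 _ _ f _ _ anB) -eqB (@lab_U1 _ _ f _ _ wB0).
by move/addIr/finj.
Qed.
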